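(* Let $\pi\in\mathcal C_n(321)$ and $w=\hat\pi$. Then $$\#\{(i,k): i+2\le k\le n,\ \hat\pi_k<\hat\pi_i<\hat\pi_{i+1}<\pi(\hat\pi_k)\}=N_{\underline{23}\,\underline{14}}(w)+N_{\underline{23}\,\underline{1}}(w).$$
   Context: Permutations of $[n]$ are written in one-line notation $\pi=\pi_1\cdots\pi_n$. A permutation contains $321$ if there are $i<j<k$ with $\pi_i>\pi_j>\pi_k$. $\mathcal C_n$ is the set of cyclic permutations of $[n]$ (a single $n$-cycle), and $\mathcal C_n(321)$ those avoiding $321$. The standard cycle notation of $\pi$ writes each cycle with its largest element first, as $(m,\pi(m),\pi^2(m),\dots)$, and lists the cycles in increasing order of their largest elements. $\theta:S_n\to S_n$ sends $\pi$ to the permutation whose one-line notation is the standard cycle notation of $\pi$ with parentheses erased; $\hat\pi=\theta(\pi)$. For a sequence $w=w_1\cdots w_N$ of distinct integers: $N_{\underline{23}\,\underline{14}}(w)=\#\{(i,j): i+2\le j\le N-1,\ w_j<w_i<w_{i+1}<w_{j+1}\}$; $N_{\underline{23}\,\underline{1}}(w)=\#\{i: i+1\le N-1,\ w_N<w_i<w_{i+1}\}$ (the ''1'' is the last entry of $w$). *)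

(* Defs.v *)
(* Convention: [n] = {1..n} is represented by 'I_n = {0..n-1}
   (a uniform shift by 1, which preserves all order comparisons). Sequence
   positions are 0-based. *)
From mathcomp Require Import all_boot all_order all_fingroup.
Set Implicit Arguments. Unset Strict Implicit. Unset Printing Implicit Defensive.

Definition avoids321 n (s : 'S_n) : bool :=
  ~~ [exists i : 'I_n, exists j : 'I_n, exists k : 'I_n,
        [&& i < j, j < k, s j < s i & s k < s j]].

Definition cyclic_perm n (s : 'S_n) : bool :=
  [forall x : 'I_n, #|porbit s x| == n].

Definition cycle_max n (s : 'S_n) (m : 'I_n) : bool :=
  [forall y in porbit s m, y <= m].

(* standard cycle notation with parentheses erased:
   cycles (m, s m, s^2 m, ...) with m the max of its cycle, listed in
   increasing order of m. This is the one-line notation of theta(s). *)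
Definition hat n (s : 'S_n) : seq 'I_n :=
  flatten [seq traject s m #|porbit s m| | m <- enum 'I_n & cycle_max s m].

Definition hatv n (s : 'S_n) : seq nat := map val (hat s).

(* s applied to a value in 0..n-1 (identity outside; never used there) *)
Definition app n (s : 'S_n) (x : nat) : nat :=
  if insub x is Some y then val (s y) else x.

(* N_{23 14}(w) : 1-based pairs (i,j), i+2 <= j <= N-1,
   w_j < w_i < w_{i+1} < w_{j+1}; here 0-based. *)
Definition N2314 (w : seq nat) : nat :=
  \sum_(i < size w) \sum_(j < size w)
     [&& i.+2 <= j, j.+1 < size w,
         nth 0 w j < nth 0 w i, nth 0 w i < nth 0 w i.+1
       & nth 0 w i.+1 < nth 0 w j.+1].

(* N_{23 1}(w) : 1-based i with i+1 <= N-1, w_N < w_i < w_{i+1}; 0-based. *)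
Definition N231 (w : seq nat) : nat :=
  \sum_(i < size w)
     [&& i.+2 < size w,
         nth 0 w (size w).-1 < nth 0 w i
       & nth 0 w i < nth 0 w i.+1].

(* lhs_count: 1-based pairs (i,k), i+2 <= k <= n,
   hat_k < hat_i < hat_{i+1} < pi(hat_k); here 0-based. *)
Definition lhs_count n (s : 'S_n) : nat :=
  let w := hatv s in
  \sum_(i < n) \sum_(k < n)
     [&& i.+2 <= k,
         nth 0 w k < nth 0 w i, nth 0 w i < nth 0 w i.+1
       & nth 0 w i.+1 < app s (nth 0 w k)].

(* Main.v *)
Require Import Defs.
From mathcomp Require Import all_boot all_order all_fingroup.

Lemma hat_eq N (s : 'S_N.+1) : cyclic_perm s -> hat s = traject s ord_max N.+1.
Proof.
move=> /forallP cyc.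
have cardN x : #|porbit s x| = N.+1 by apply/eqP.
have full x y : y \in porbit s x.
  have: porbit s x =i [set: 'I_N.+1].
    by apply/subset_cardP; rewrite ?cardsT ?card_ord ?cardN ?subsetT.
  by move=> ->; rewrite inE.
rewrite /hat (@eq_filter _ _ (pred1 ord_max)).
  by rewrite filter_pred1_uniq ?enum_uniq ?mem_enum //= cats0 cardN.
move=> m /=; apply/forallP/eqP.
  move=> H; have := H ord_max; rewrite full /= => Hm; apply/val_inj/eqP.
  by rewrite /= eqn_leq Hm -ltnS ltn_ord.
by move=> -> y; apply/implyP => _; exact: leq_ord.
Qed.

Theorem mainTheorem5 (n : nat) (s : 'S_n) :
  cyclic_perm s -> avoids321 s ->
  lhs_count s = N2314 (hatv s) + N231 (hatv s).
Proof.
move=> cyc _.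
case: n s cyc => [|N] s cyc.
  have -> : hatv s = [::] by rewrite /hatv; case: (hat s) => // [[]].
  by rewrite /lhs_count /N2314 /N231 !big_ord0.
have cardN x : #|porbit s x| = N.+1 by apply/eqP; move/forallP: cyc.
set m : 'I_N.+1 := ord_max.
have Hw : hatv s = map val (traject s m N.+1) by rewrite /hatv hat_eq.
have Hsize : size (hatv s) = N.+1 by rewrite Hw size_map size_traject.
have Hnth k : k < N.+1 -> nth 0 (hatv s) k = val (iter k s m).
  by move=> Hk; rewrite Hw (nth_map m) ?size_traject // nth_traject.
have Happ k : k < N.+1 -> app s (nth 0 (hatv s) k) = val (iter k.+1 s m).
  move=> Hk; rewrite Hnth // /app insubT /=; first exact: ltn_ord.
  by move=> Hin; congr (s _); apply/val_inj.
have Hlast : app s (nth 0 (hatv s) N) = N.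
  by rewrite Happ //; have := iter_porbit s m; rewrite cardN => ->.
have Hlt j : 0 < j < N.+1 -> nth 0 (hatv s) j < N.
  case/andP=> Hj0 Hj; rewrite Hnth //.
  have := ltn_ord (iter j s m); rewrite ltnS leq_eqVlt => /orP [/eqP E|//].
  have U := uniq_traject_porbit s m; rewrite cardN in U.
  have Hj' : j < size (traject s m N.+1) by rewrite size_traject.
  have H0' : 0 < size (traject s m N.+1) by rewrite size_traject.
  have := nth_uniq m Hj' H0' U.
  rewrite !nth_traject // => /=; rewrite (_ : iter j s m == m) ?eqxx.
    by move/esym/eqP => j0; move: Hj0; rewrite j0.
  by apply/eqP/val_inj; rewrite /= E.
rewrite /lhs_count /N2314 /N231 Hsize -big_split /=.
apply: eq_bigr => i _.
rewrite (bigD1 m) //= [X in _ = X + _](bigD1 m) //= ltnn andbF add0n.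
rewrite [RHS]addnC; congr addn.
  rewrite Hlast ltnS.
  case: (ltnP i.+1 N) => Hi //=.
  by rewrite Hlt ?andbT //= ltnS (ltnW Hi).
apply: eq_bigr => k Hk.
have HkN : k < N.
  have := ltn_ord k; rewrite ltnS leq_eqVlt => /orP [/eqP E|//].
  by move: Hk; rewrite (_ : k = m) ?eqxx //; apply/val_inj.
by rewrite Happ ?ltnS ?(ltnW HkN) // -Hnth // HkN.
Qed.
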